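(* Let $v,q\ge 2$, $m,s\ge1$ and $R\ge 0$ be integers with $ms-R\ge 2$. Then $$K_{vq}^{RT}(m,s,R)\le OCAN(ms-R,m,s,v)\, K_{q}^{RT}(m,s,R).$$
   Context: For positive integers $m,s$, the RT poset $[m\times s]$ is the set $\{1,\ldots,ms\}$ partitioned into $m$ blocks $B_i=\{is+1,\ldots,(i+1)s\}$; each block is a chain under the usual order of the integers, and elements of different blocks are incomparable. An ideal is a down-closed subset; an anti-ideal is the complement of an ideal; $\langle A\rangle$ denotes the smallest ideal containing $A$. For $x,y\in\mathbb{Z}_q^{ms}$, $d_{RT}(x,y)=|\langle\{i:x_i\neq y_i\}\rangle|$. A code $C\subseteq \mathbb{Z}_q^{ms}$ is an $R$-covering if every $x\in\mathbb{Z}_q^{ms}$ has some $c\in C$ with $d_{RT}(x,c)\le R$; $K_q^{RT}(m,s,R)$ is the smallest size of an $R$-covering. An ordered covering array $OCA(N;t,m,s,v)$ ($2\le t\le ms$) is an $N\times ms$ array over an alphabet of size $v$ with columns labeled by the elements of $[m\times s]$ such that for every anti-ideal $J$ of size $t$, every $t$-tuple over the alphabet appears as a row of the $N\times t$ subarray formed by the columns labeled by $J$; $OCAN(t,m,s,v)$ is the least such $N$. *)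

(* Defs.v *)
From mathcomp Require Import all_boot.
Set Implicit Arguments. Unset Strict Implicit. Unset Printing Implicit Defensive.

(* RT poset [m x s] on positions 'I_(m*s) (0-based): block of i is i %/ s;
   i <= j in the poset iff same block and i <= j as integers. *)
Definition rt_le (m s : nat) (i j : 'I_(m * s)) : bool :=
  (i %/ s == j %/ s) && (i <= j)%N.

Definition rt_ideal (m s : nat) (I : {set 'I_(m * s)}) : bool :=
  [forall i, forall j, (j \in I) ==> rt_le i j ==> (i \in I)].

Definition rt_anti_ideal (m s : nat) (J : {set 'I_(m * s)}) : bool :=
  rt_ideal (~: J).

Definition rt_gen (m s : nat) (A : {set 'I_(m * s)}) : {set 'I_(m * s)} :=
  [set j | [exists i in A, rt_le j i]].

Definition word (q m s : nat) := {ffun 'I_(m * s) -> 'I_q}.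

Definition d_RT (q m s : nat) (x y : word q m s) : nat :=
  #|rt_gen [set i | x i != y i]|.

Definition is_covering (q m s R : nat) (C : {set word q m s}) : bool :=
  [forall x : word q m s, [exists c in C, d_RT x c <= R]].

Lemma covering_exists (q m s R : nat) :
  exists n, [exists C : {set word q m s}, is_covering R C && (#|C| == n)].
Proof.
exists #|[set: word q m s]|; apply/existsP; exists [set: word q m s].
rewrite eqxx andbT; apply/forallP=> x; apply/existsP; exists x.
rewrite in_setT /= /d_RT.
have -> : [set i | x i != x i] = set0 by apply/setP=> i; rewrite !inE eqxx.
have -> : rt_gen (m:=m) (s:=s) set0 = set0.
  by apply/setP=> j; rewrite !inE; apply/existsP=> -[i]; rewrite inE.
by rewrite cards0.
Qed.

Definition K_RT (q m s R : nat) : nat := ex_minn (covering_exists q m s R).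

Definition array (N v m s : nat) := {ffun 'I_N -> {ffun 'I_(m * s) -> 'I_v}}.

Definition is_OCA (N t m s v : nat) (A : array N v m s) : bool :=
  [forall J : {set 'I_(m * s)},
     (rt_anti_ideal J && (#|J| == t)) ==>
     [forall f : {ffun 'I_(m * s) -> 'I_v},
        [exists r : 'I_N, [forall j in J, A r j == f j]]]].

Lemma OCA_exists (t m s v : nat) :
  exists N, [exists A : array N v m s, is_OCA t A].
Proof.
exists #|{ffun 'I_(m * s) -> 'I_v}|; apply/existsP.
exists [ffun r => enum_val r]; apply/forallP=> J; apply/implyP=> _.
apply/forallP=> f; apply/existsP; exists (enum_rank f).
by apply/forall_inP=> j _; rewrite ffunE enum_rankK.
Qed.

Definition OCAN (t m s v : nat) : nat := ex_minn (OCA_exists t m s v).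

(* Main.v *)
Require Import Defs.
From mathcomp Require Import all_boot.
From mathcomp Require Import zify.
Set Implicit Arguments. Unset Strict Implicit. Unset Printing Implicit Defensive.

Lemma rt_leP m s (i j : 'I_(m * s)) : rt_le i j -> (i <= j)%N.
Proof. by case/andP. Qed.

Lemma rt_le_refl m s (i : 'I_(m * s)) : rt_le i i.
Proof. by rewrite /rt_le eqxx leqnn. Qed.

Lemma rt_le_trans m s (i j k : 'I_(m * s)) : rt_le i j -> rt_le j k -> rt_le i k.
Proof.
rewrite /rt_le => /andP[/eqP e1 l1] /andP[/eqP e2 l2].
by rewrite e1 e2 eqxx (leq_trans l1 l2).
Qed.

Lemma rt_idealP m s (I : {set 'I_(m * s)}) :
  (forall i j, j \in I -> rt_le i j -> i \in I) -> rt_ideal I.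
Proof.
move=> H; apply/forallP=> i; apply/forallP=> j; apply/implyP=> Hj; apply/implyP.
exact: H.
Qed.

Lemma rt_idealE m s (I : {set 'I_(m * s)}) i j :
  rt_ideal I -> j \in I -> rt_le i j -> i \in I.
Proof.
move=> /forallP /(_ i) /forallP /(_ j) /implyP H Hj; exact: (implyP (H Hj)).
Qed.

Lemma rt_gen_ideal m s (A : {set 'I_(m * s)}) : rt_ideal (rt_gen A).
Proof.
apply: rt_idealP => i j; rewrite !inE => /existsP[k /andP[Hk Hjk]] Hij.
by apply/existsP; exists k; rewrite Hk (rt_le_trans Hij Hjk).
Qed.

Lemma rt_gen_sub m s (A I : {set 'I_(m * s)}) :
  rt_ideal I -> A \subset I -> rt_gen A \subset I.
Proof.
move=> HI /subsetP HA; apply/subsetP=> j; rewrite inE => /existsP[k /andP[Hk Hjk]].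
exact: (rt_idealE HI (HA _ Hk) Hjk).
Qed.

Lemma sub_rt_gen m s (A : {set 'I_(m * s)}) : A \subset rt_gen A.
Proof.
by apply/subsetP=> j Hj; rewrite inE; apply/existsP; exists j; rewrite Hj rt_le_refl.
Qed.

Lemma grow m s n : forall I : {set 'I_(m * s)}, rt_ideal I -> #|I| + n <= m * s ->
  exists I', [/\ rt_ideal I', I \subset I' & #|I'| = #|I| + n].
Proof.
elim: n => [|n IH] I HI Hc.
  by exists I; rewrite addn0 subxx.
have : 0 < #|~: I|.
  have := cardsC I; rewrite card_ord; lia.
rewrite card_gt0 => /set0Pn[j0]; rewrite inE => Hj0.
case: (@arg_minnP _ j0 (fun j => j \notin I) (fun j : 'I_(m * s) => val j) Hj0) => j Hj Hmin.
have HI1 : rt_ideal (j |: I).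
  apply: rt_idealP => i k; rewrite !inE => /orP[/eqP-> | Hk] Hik; last first.
    by rewrite (rt_idealE HI Hk Hik) orbT.
  case Hi: (i \in I); first by rewrite orbT.
  have := Hmin i (negbT Hi); have := rt_leP Hik => a b.
  by apply/orP; left; apply/eqP; apply: val_inj; apply/eqP; rewrite eqn_leq a b.
have Hc1 : #|j |: I| = #|I| + 1 by rewrite cardsU1 Hj addnC.
have [I' [H1 H2 H3]] := IH _ HI1 (ltac:(rewrite Hc1; lia)).
exists I'; split => //.
  by apply: subset_trans H2; apply/subsetP=> x Hx; rewrite inE Hx orbT.
by rewrite H3 Hc1; lia.
Qed.

Section Enc.
Variables v q : nat.
Hypothesis qpos : 0 < q.

Lemma enc_lt (a : 'I_v) (b : 'I_q) : a * q + b < v * q.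
Proof. have := ltn_ord a; have := ltn_ord b; nia. Qed.
Definition enc (a : 'I_v) (b : 'I_q) : 'I_(v * q) := Ordinal (enc_lt a b).

Lemma dec1_lt (x : 'I_(v * q)) : x %/ q < v.
Proof. by rewrite ltn_divLR. Qed.
Definition dec1 (x : 'I_(v * q)) : 'I_v := Ordinal (dec1_lt x).
Definition dec2 (x : 'I_(v * q)) : 'I_q := Ordinal (ltn_pmod x qpos).

Lemma encK x : enc (dec1 x) (dec2 x) = x.
Proof. by apply: val_inj => /=; rewrite -divn_eq. Qed.
End Enc.

Theorem theorem3 (v q m s R : nat) :
  2 <= v -> 2 <= q -> 1 <= m -> 1 <= s -> 2 <= m * s - R ->
  K_RT (v * q) m s R <= OCAN (m * s - R) m s v * K_RT q m s R.
Proof.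
move=> Hv Hq Hm Hs HR.
have qpos : 0 < q by lia.
rewrite /K_RT /OCAN.
case: ex_minnP => K' _ Kmin.
case: ex_minnP => N /existsP[A HA] _.
case: ex_minnP => K /existsP[C /andP[HC /eqP HK]] _.
pose F (p : 'I_N * word q m s) : word (v * q) m s :=
  [ffun i => enc qpos (A p.1 i) (p.2 i)].
pose C' := F @: setX [set: 'I_N] C.
have Hcard : #|C'| <= N * K.
  by apply: leq_trans (leq_imset_card _ _) _; rewrite cardsX cardsT card_ord HK.
apply: leq_trans Hcard; apply: Kmin; apply/existsP; exists C'.
rewrite eqxx andbT; apply/forallP => x.
pose xa : {ffun 'I_(m * s) -> 'I_v} := [ffun i => dec1 qpos (x i)].
pose xb : word q m s := [ffun i => dec2 qpos (x i)].
have /existsP[c /andP[Hc Hd]] := forallP HC xb.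
pose I := rt_gen [set i | xb i != c i].
have HdI : #|I| <= R by [].
have HRle : R <= m * s by lia.
have Hle : #|I| + (R - #|I|) <= m * s by rewrite subnKC.
have [I' [HI' HII' HcI']] := grow (rt_gen_ideal [set i | xb i != c i]) Hle.
have HcI : #|I'| = R by rewrite HcI' subnKC.
have HJ : rt_anti_ideal (~: I') && (#|~: I'| == m * s - R).
  rewrite /rt_anti_ideal setCK HI' /=.
  have := cardsC I'; rewrite card_ord HcI => E; apply/eqP; move: E; set k := #|~: I'|; nia.
have /existsP[r Hr] := forallP (implyP (forallP HA (~: I')) HJ) xa.
apply/existsP; exists (F (r, c)); rewrite (imset_f F) ?inE ?Hc //=.
rewrite /d_RT; apply: leq_trans (subset_leq_card _) (eq_leq HcI).
apply: rt_gen_sub => //; apply/subsetP => i; rewrite inE.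
apply: contraR => Hi.
have HiJ : i \in ~: I' by rewrite inE.
have Ha : A r i = xa i by apply/eqP; exact: (forall_inP Hr i HiJ).
have Hb : c i = xb i.
  apply/eqP; rewrite eq_sym; apply: contraR Hi => Hne.
  by apply: (subsetP HII'); apply: (subsetP (sub_rt_gen _)); rewrite inE.
by rewrite ffunE /= Ha Hb !ffunE encK.
Qed.
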